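(* Let $Z_{\mathrm{NL}}$ be a feasible point of problem (NLP). Let $\mathbf Z$ be an optimal solution of the SDP (SDP) constructed at $Z_{\mathrm{NL}}$. Then the point obtained from $\mathbf Z$ by keeping $\mathbf A,\mathbf B,\mathbf d,\boldsymbol{\mathcal Z},\boldsymbol\lambda,\mathbf K,\underline{\mathbf b},\bar{\mathbf b},\tilde{\mathbf\Theta},\tilde{\mathbf r},\bar{\boldsymbol\epsilon}$ and replacing each hatted matrix variable ($\hat{\tilde{\mathbf M}},\hat{\underline{\mathbf D}}_{[i]},\hat{\mathbf W}_{[i]},\hat{\bar{\mathbf D}}_{[i]},\hat{\underline{\mathbf S}}_{[i]},\hat{\bar{\mathbf S}}_{[i]},\hat{\underline{\mathbf R}}_{[i]},\hat{\bar{\mathbf R}}_{[i]}$) by its inverse is feasible for (NLP), and $$\alpha\|\underline{\mathbf b}\|_1+\beta\|\bar{\boldsymbol\epsilon}\|_1+\gamma\tilde{\mathbf r}\le\alpha\|\underline b\|_1+\beta\|\bar\epsilon\|_1+\gamma\tilde r,$$ where the right side is evaluated at $Z_{\mathrm{NL}}$.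
   Context: Notation: $\mathcal{P}(M,b):=\{x:-b\le Mx\le b\}$; $M_i$ row $i$ of $M$, $b_i$ entry $i$ of $b$; $\mathbb{D}_+^m$ diagonal $m\times m$ matrices with positive diagonal; $\mathbb{S}_+^m$ symmetric positive definite $m\times m$ matrices; $\succ0$ ($\prec0$) symmetric positive (negative) definite; $*$ symmetric blocks; $\mathbf 1$ all-ones; $\oplus$ Minkowski sum. For $\mathbf L,L\in\mathbb{R}^{m\times n}$ and symmetric invertible $\mathbf D,D$, $\mathcal{L}^{L,D}_{\mathbf L,\mathbf D}:=\mathbf L^\top D^{-1}L+L^\top D^{-1}\mathbf L-L^\top D^{-1}\mathbf DD^{-1}L$. Fixed data: $F\in\mathbb{R}^{m_w\times n_x}$, $\underline P\in\mathbb{R}^{\underline m\times n_x}$, $\bar P\in\mathbb{R}^{\bar m\times n_x}$, $\bar E\in\mathbb{R}^{m_\epsilon\times n_x}$, $V^x\in\mathbb{R}^{m_x\times n_x}$, $v^x\in\mathbb{R}^{m_x}_+$, $V^u\in\mathbb{R}^{m_u\times n_u}$, $v^u\in\mathbb{R}^{m_u}_+$, vertices $x_{[1]},\dots,x_{[m_x^v]}$ of $\mathcal{P}(V^x,v^x)$, $\tilde Q\in\mathbb{S}_+^{n_x}$, $\tilde R\in\mathbb{S}_+^{n_u}$, weights $\alpha,\beta,\gamma\ge0$, $\hat\theta_T>0$, and a finite set $\mathcal{J}_T$ of triples $z=(x,u,x_+)\in\mathbb{R}^{n_x}\times\mathbb{R}^{n_u}\times\mathbb{R}^{n_x}$; $\zeta(A,B,z):=x_+-Ax-Bu$.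 Set $\hat\Sigma$: $(A,B,d,\mathcal Z,\lambda)$ with $\mathcal Z\in\mathbb{R}^{m_w\times(2n_x+n_u)}$, $\mathcal Z\ge0$, $-\mathcal Z\le F[-A\ -B\ \mathbf I]\le\mathcal Z$ entrywise, $\sum_j\mathcal Z_{ij}\le\lambda$ for all $i$, $d>\lambda\hat\theta_T\mathbf 1$, and $\zeta(A,B,z)\in\mathcal{P}(F,d-\lambda\hat\theta_T\mathbf 1)$ for all $z\in\mathcal J_T$. Set $\bar{\mathcal S}$: $(\bar b,\bar\epsilon)$ with $x_{[k]}\in\mathcal{P}(\bar P,\bar b)\oplus\mathcal{P}(\bar E,\bar\epsilon)$ for all $k$. Nonlinear conditions: (RPI$_i$) $\begin{bmatrix}2\underline b_i-\underline b^\top\underline D_{[i]}\underline b-d^\top W_{[i]}d & \underline P_i & \underline P_i(A+BK)\\ * & F^\top W_{[i]}F & \mathbf 0\\ * & * & \underline P^\top\underline D_{[i]}\underline P\end{bmatrix}\succ0$; (PI$_i$) $\begin{bmatrix}2\bar b_i-\bar b^\top\bar D_{[i]}\bar b & \bar P_i(A+BK)\\ * & \bar P^\top\bar D_{[i]}\bar P\end{bmatrix}\succ0$; (X$_i$) $\begin{bmatrix}2v^x_i-\underline b^\top\underline S_{[i]}\underline b-\bar b^\top\bar S_{[i]}\bar b & V^x_i & V^x_i\\ * & \underline P^\top\underline S_{[i]}\underline P & \mathbf 0\\ * & * & \bar P^\top\bar S_{[i]}\bar P\end{bmatrix}\succ0$; (U$_i$) same as (X$_i$) with $v^x_i,V^x_i,\underline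 S,\bar S$ replaced by $v^u_i,V^u_iK,\underline R,\bar R$; (D) $(A+BK)^\top\tilde\Theta(A+BK)-\tilde\Theta+\tilde Q+K^\top\tilde RK\prec0$; (E) $\bar P^\top\tilde M\bar P-\tilde\Theta\succ0$, $\tilde r-\bar b^\top\tilde M\bar b>0$. Problem (NLP): minimize $\alpha\|\underline b\|_1+\beta\|\bar\epsilon\|_1+\gamma\tilde r$ over $Z_{\mathrm{NL}}=(A,B,d,\mathcal Z,\lambda,K,\underline b,\bar b,\tilde\Theta\in\mathbb{S}_+^{n_x},\tilde r,\tilde M\in\mathbb{D}_+^{\bar m},\bar\epsilon,\{\underline D_{[i]}\in\mathbb{D}_+^{\underline m},W_{[i]}\in\mathbb{D}_+^{m_w}\}_{i\le\underline m},\{\bar D_{[i]}\in\mathbb{D}_+^{\bar m}\}_{i\le\bar m},\{\underline S_{[i]},\bar S_{[i]}\}_{i\le m_x},\{\underline R_{[i]},\bar R_{[i]}\}_{i\le m_u})$ (with $\underline S_{[i]},\underline R_{[i]}\in\mathbb{D}_+^{\underline m}$, $\bar S_{[i]},\bar R_{[i]}\in\mathbb{D}_+^{\bar m}$) subject to $(A,B,d,\mathcal Z,\lambda)\in\hat\Sigma$, $(\bar b,\bar\epsilon)\in\bar{\mathcal S}$, (RPI$_i$) for $i\le\underline m$, (PI$_i$) for $i\le\bar m$, (X$_i$) for $i\le m_x$, (U$_i$) for $i\le m_u$, (D), (E). Problem (SDP) at $Z_{\mathrm{NL}}$: minimize $\alpha\|\underline{\mathbf b}\|_1+\beta\|\bar{\boldsymbol\epsilon}\|_1+\gamma\tilde{\mathbf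 r}$ over bold variables of the same sizes (with $\tilde{\mathbf\Theta}\in\mathbb{S}_+^{n_x}$ and all hatted matrices diagonal of the sizes of the corresponding multipliers) subject to $(\mathbf A,\mathbf B,\mathbf d,\boldsymbol{\mathcal Z},\boldsymbol\lambda)\in\hat\Sigma$, $(\bar{\mathbf b},\bar{\boldsymbol\epsilon})\in\bar{\mathcal S}$ and the following LMIs, in which unbolded quantities are the values in $Z_{\mathrm{NL}}$: for each $i\le\underline m$, $\begin{bmatrix}\mathbf I&\mathbf 0&\mathbf 0&-\mathbf B^\top\underline P_i^\top&\mathbf 0&\mathbf K\\ *&\hat{\underline{\mathbf D}}_{[i]}&\mathbf 0&\underline{\mathbf b}&\mathbf 0&\mathbf 0\\ *&*&\hat{\mathbf W}_{[i]}&\mathbf d&\mathbf 0&\mathbf 0\\ *&*&*&2\underline{\mathbf b}_i+\mathcal{L}^{B^\top\underline P_i^\top,\mathbf I}_{\mathbf B^\top\underline P_i^\top,\mathbf I}&\underline P_i&\underline P_i\mathbf A\\ *&*&*&*&\mathcal{L}^{F,W_{[i]}^{-1}}_{F,\hat{\mathbf W}_{[i]}}&\mathbf 0\\ *&*&*&*&*&\mathcal{L}^{\underline P,\underline D_{[i]}^{-1}}_{\underline P,\hat{\underline{\mathbf D}}_{[i]}}+\mathcal{L}^{K,\mathbf I}_{\mathbf K,\mathbf I}\end{bmatrix}\succ0$; for each $i\le\bar m$, $\begin{bmatrix}\mathbf I&\mathbf 0&-\mathbf B^\top\bar P_i^\top&\mathbf K\\ *&\hat{\bar{\mathbf D}}_{[i]}&\bar{\mathbf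 b}&\mathbf 0\\ *&*&2\bar{\mathbf b}_i+\mathcal{L}^{B^\top\bar P_i^\top,\mathbf I}_{\mathbf B^\top\bar P_i^\top,\mathbf I}&\bar P_i\mathbf A\\ *&*&*&\mathcal{L}^{\bar P,\bar D_{[i]}^{-1}}_{\bar P,\hat{\bar{\mathbf D}}_{[i]}}+\mathcal{L}^{K,\mathbf I}_{\mathbf K,\mathbf I}\end{bmatrix}\succ0$; for each $i\le m_x$, $\begin{bmatrix}\hat{\underline{\mathbf S}}_{[i]}&\mathbf 0&\underline{\mathbf b}&\mathbf 0&\mathbf 0\\ *&\hat{\bar{\mathbf S}}_{[i]}&\bar{\mathbf b}&\mathbf 0&\mathbf 0\\ *&*&2v^x_i&V^x_i&V^x_i\\ *&*&*&\mathcal{L}^{\underline P,\underline S_{[i]}^{-1}}_{\underline P,\hat{\underline{\mathbf S}}_{[i]}}&\mathbf 0\\ *&*&*&*&\mathcal{L}^{\bar P,\bar S_{[i]}^{-1}}_{\bar P,\hat{\bar{\mathbf S}}_{[i]}}\end{bmatrix}\succ0$; for each $i\le m_u$, the same with $\hat{\underline{\mathbf S}},\hat{\bar{\mathbf S}},\underline S,\bar S,v^x_i,V^x_i$ replaced by $\hat{\underline{\mathbf R}},\hat{\bar{\mathbf R}},\underline R,\bar R,v^u_i,V^u_i\mathbf K$; $\begin{bmatrix}\mathbf I&\mathbf 0&\mathbf 0&-\mathbf B^\top&\mathbf K\\ *&\tilde Q^{-1}&\mathbf 0&\mathbf 0&\mathbf I\\ *&*&\tilde R^{-1}&\mathbf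 0&\mathbf K\\ *&*&*&\mathcal{L}^{\mathbf I,\tilde\Theta}_{\mathbf I,\tilde{\mathbf\Theta}}+\mathcal{L}^{B^\top,\mathbf I}_{\mathbf B^\top,\mathbf I}&\mathbf A\\ *&*&*&*&\tilde{\mathbf\Theta}+\mathcal{L}^{K,\mathbf I}_{\mathbf K,\mathbf I}\end{bmatrix}\succ0$; and $\mathcal{L}^{\bar P,\tilde M^{-1}}_{\bar P,\hat{\tilde{\mathbf M}}}-\tilde{\mathbf\Theta}\succ0$, $\begin{bmatrix}\hat{\tilde{\mathbf M}}&\bar{\mathbf b}\\ *&\tilde{\mathbf r}\end{bmatrix}\succ0$. (The top-left $\mathbf I$ blocks are $n_u\times n_u$.) *)

(* Defs.v *)
From HB Require Import structures.
From mathcomp Require Import all_boot all_order all_algebra.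

Set Implicit Arguments.
Unset Strict Implicit.
Unset Printing Implicit Defensive.

Import Order.TTheory GRing.Theory Num.Theory.
Local Open Scope ring_scope.

Section NLPSDP.
Variable R : realFieldType.

Definition posdef n (M : 'M[R]_n) : Prop :=
  M^T = M /\ forall x : 'cV[R]_n, x != 0 -> 0 < (x^T *m M *m x) 0 0.
Definition negdef n (M : 'M[R]_n) : Prop := posdef (- M).
Definition diagpos n (D : 'M[R]_n) : Prop :=
  is_diag_mx D /\ forall i, 0 < D i i.

Definition mxle m n (A B : 'M[R]_(m, n)) : Prop := forall i j, A i j <= B i j.
Definition mxlt m n (A B : 'M[R]_(m, n)) : Prop := forall i j, A i j < B i j.

Definition inP m n (M : 'M[R]_(m, n)) (b : 'cV[R]_m) (x : 'cV[R]_n) : Prop :=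
  mxle (- b) (M *m x) /\ mxle (M *m x) b.

Definition norm1 m (b : 'cV[R]_m) : R := \sum_i `|b i 0|.

Definition ones m : 'cV[R]_m := const_mx 1.

Definition sc (x : R) : 'M[R]_1 := x%:M.

(* calL Lb Db L D  =  \mathcal L^{L,D}_{Lb,Db}
   = Lb^T D^{-1} L + L^T D^{-1} Lb - L^T D^{-1} Db D^{-1} L *)
Definition calL m n (Lb : 'M[R]_(m, n)) (Db : 'M[R]_m)
  (L : 'M[R]_(m, n)) (D : 'M[R]_m) : 'M[R]_n :=
  Lb^T *m invmx D *m L + L^T *m invmx D *m Lb
  - L^T *m invmx D *m Db *m invmx D *m L.

(* symmetric block matrices given by their upper triangular blocks
   (the lower blocks "*" are the transposes) *)
Definition sym2 p q (A : 'M[R]_p) (B : 'M[R]_(p, q)) (C : 'M[R]_q)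
  : 'M[R]_(p + q) := block_mx A B B^T C.

Definition sym3 p q r (A11 : 'M[R]_p) (A12 : 'M[R]_(p, q)) (A13 : 'M[R]_(p, r))
  (A22 : 'M[R]_q) (A23 : 'M[R]_(q, r)) (A33 : 'M[R]_r) : 'M[R]_(p + (q + r)) :=
  sym2 A11 (row_mx A12 A13) (sym2 A22 A23 A33).

Definition sym4 p q r s (A11 : 'M[R]_p) (A12 : 'M[R]_(p, q)) (A13 : 'M[R]_(p, r))
  (A14 : 'M[R]_(p, s))
  (A22 : 'M[R]_q) (A23 : 'M[R]_(q, r)) (A24 : 'M[R]_(q, s))
  (A33 : 'M[R]_r) (A34 : 'M[R]_(r, s)) (A44 : 'M[R]_s)
  : 'M[R]_(p + (q + (r + s))) :=
  sym2 A11 (row_mx A12 (row_mx A13 A14)) (sym3 A22 A23 A24 A33 A34 A44).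

Definition sym5 p q r s t (A11 : 'M[R]_p) (A12 : 'M[R]_(p, q)) (A13 : 'M[R]_(p, r))
  (A14 : 'M[R]_(p, s)) (A15 : 'M[R]_(p, t))
  (A22 : 'M[R]_q) (A23 : 'M[R]_(q, r)) (A24 : 'M[R]_(q, s)) (A25 : 'M[R]_(q, t))
  (A33 : 'M[R]_r) (A34 : 'M[R]_(r, s)) (A35 : 'M[R]_(r, t))
  (A44 : 'M[R]_s) (A45 : 'M[R]_(s, t)) (A55 : 'M[R]_t)
  : 'M[R]_(p + (q + (r + (s + t)))) :=
  sym2 A11 (row_mx A12 (row_mx A13 (row_mx A14 A15)))
    (sym4 A22 A23 A24 A25 A33 A34 A35 A44 A45 A55).

Definition sym6 p q r s t u (A11 : 'M[R]_p) (A12 : 'M[R]_(p, q)) (A13 : 'M[R]_(p, r))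
  (A14 : 'M[R]_(p, s)) (A15 : 'M[R]_(p, t)) (A16 : 'M[R]_(p, u))
  (A22 : 'M[R]_q) (A23 : 'M[R]_(q, r)) (A24 : 'M[R]_(q, s)) (A25 : 'M[R]_(q, t))
  (A26 : 'M[R]_(q, u))
  (A33 : 'M[R]_r) (A34 : 'M[R]_(r, s)) (A35 : 'M[R]_(r, t)) (A36 : 'M[R]_(r, u))
  (A44 : 'M[R]_s) (A45 : 'M[R]_(s, t)) (A46 : 'M[R]_(s, u))
  (A55 : 'M[R]_t) (A56 : 'M[R]_(t, u)) (A66 : 'M[R]_u)
  : 'M[R]_(p + (q + (r + (s + (t + u))))) :=
  sym2 A11 (row_mx A12 (row_mx A13 (row_mx A14 (row_mx A15 A16))))
    (sym5 A22 A23 A24 A25 A26 A33 A34 A35 A36 A44 A45 A46 A55 A56 A66).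

(* Fixed data of the problem.  Dimensions:
   nx = n_x, nu = n_u, mw = m_w, mlo = underline m, mhi = bar m,
   meps = m_epsilon, mx = m_x, mu = m_u, mxv = m_x^v. *)
Record data (nx nu mw mlo mhi meps mx mu mxv : nat) := Data {
  dF : 'M[R]_(mw, nx);
  dPlo : 'M[R]_(mlo, nx);
  dPhi : 'M[R]_(mhi, nx);
  dE : 'M[R]_(meps, nx);
  dVx : 'M[R]_(mx, nx);
  dvx : 'cV[R]_mx;
  dVu : 'M[R]_(mu, nu);
  dvu : 'cV[R]_mu;
  dxv : 'I_mxv -> 'cV[R]_nx;
  dQ : 'M[R]_nx;
  dR : 'M[R]_nu;
  dalpha : R; dbeta : R; dgamma : R;
  dtheta : R;
  dJ : seq ('cV[R]_nx * 'cV[R]_nu * 'cV[R]_nx)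
}.

(* Decision variables (same shape for (NLP) and (SDP)). *)
Record var (nx nu mw mlo mhi meps mx mu : nat) := Var {
  vA : 'M[R]_nx;
  vB : 'M[R]_(nx, nu);
  vd : 'cV[R]_mw;
  vZ : 'M[R]_(mw, nx + nu + nx);
  vlam : R;
  vK : 'M[R]_(nu, nx);
  vblo : 'cV[R]_mlo;
  vbhi : 'cV[R]_mhi;
  vTh : 'M[R]_nx;
  vr : R;
  vM : 'M[R]_mhi;
  veps : 'cV[R]_meps;
  vDlo : 'I_mlo -> 'M[R]_mlo;
  vW : 'I_mlo -> 'M[R]_mw;
  vDhi : 'I_mhi -> 'M[R]_mhi;
  vSlo : 'I_mx -> 'M[R]_mlo;
  vShi : 'I_mx -> 'M[R]_mhi;
  vRlo : 'I_mu -> 'M[R]_mlo;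
  vRhi : 'I_mu -> 'M[R]_mhi
}.

Variables nx nu mw mlo mhi meps mx mu mxv : nat.
Implicit Types (D : data nx nu mw mlo mhi meps mx mu mxv)
  (Z : var nx nu mw mlo mhi meps mx mu).

Definition zeta (A : 'M[R]_nx) (B : 'M[R]_(nx, nu))
  (z : 'cV[R]_nx * 'cV[R]_nu * 'cV[R]_nx) : 'cV[R]_nx :=
  z.2 - A *m z.1.1 - B *m z.1.2.

Definition hatSigma D (A : 'M[R]_nx) (B : 'M[R]_(nx, nu)) (d : 'cV[R]_mw)
  (Zc : 'M[R]_(mw, nx + nu + nx)) (lam : R) : Prop :=
  let G := dF D *m row_mx (row_mx (- A) (- B)) (1%:M : 'M[R]_nx) in
  mxle 0 Zc /\ mxle (- Zc) G /\ mxle G Zc /\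
  (forall i, \sum_j Zc i j <= lam) /\
  mxlt ((lam * dtheta D) *: ones mw) d /\
  (forall z, z \in dJ D -> inP (dF D) (d - (lam * dtheta D) *: ones mw) (zeta A B z)).

Definition barS D (bhi : 'cV[R]_mhi) (eps : 'cV[R]_meps) : Prop :=
  forall k, exists y z, dxv D k = y + z /\ inP (dPhi D) bhi y /\ inP (dE D) eps z.

Definition cost D Z : R :=
  dalpha D * norm1 (vblo Z) + dbeta D * norm1 (veps Z) + dgamma D * vr Z.

Definition nlp_feas D Z : Prop :=
  let A := vA Z in let B := vB Z in let K := vK Z in
  let Acl := A + B *m K in
  let blo := vblo Z in let bhi := vbhi Z in let d := vd Z in
  let F := dF D in let Plo := dPlo D in let Phi := dPhi D in
  hatSigma D A B d (vZ Z) (vlam Z) /\ barS D bhi (veps Z) /\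
      posdef (vTh Z) /\ diagpos (vM Z) /\
      (forall i, diagpos (vDlo Z i) /\ diagpos (vW Z i)) /\
      (forall i, diagpos (vDhi Z i)) /\
      (forall i, diagpos (vSlo Z i) /\ diagpos (vShi Z i)) /\
      (forall i, diagpos (vRlo Z i) /\ diagpos (vRhi Z i)) /\
  (
      (forall i, posdef (sym3
          (sc (2 * blo i 0) - blo^T *m vDlo Z i *m blo - d^T *m vW Z i *m d)
          (row i Plo) (row i Plo *m Acl)
          (F^T *m vW Z i *m F) 0
          (Plo^T *m vDlo Z i *m Plo))) /\
      (forall i, posdef (sym2
          (sc (2 * bhi i 0) - bhi^T *m vDhi Z i *m bhi)
          (row i Phi *m Acl)
          (Phi^T *m vDhi Z i *m Phi))) /\
      (forall i, posdef (sym3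
          (sc (2 * dvx D i 0) - blo^T *m vSlo Z i *m blo - bhi^T *m vShi Z i *m bhi)
          (row i (dVx D)) (row i (dVx D))
          (Plo^T *m vSlo Z i *m Plo) 0
          (Phi^T *m vShi Z i *m Phi))) /\
      (forall i, posdef (sym3
          (sc (2 * dvu D i 0) - blo^T *m vRlo Z i *m blo - bhi^T *m vRhi Z i *m bhi)
          (row i (dVu D) *m K) (row i (dVu D) *m K)
          (Plo^T *m vRlo Z i *m Plo) 0
          (Phi^T *m vRhi Z i *m Phi))) /\
      negdef (Acl^T *m vTh Z *m Acl - vTh Z + dQ D + K^T *m dR D *m K) /\
      posdef (Phi^T *m vM Z *m Phi - vTh Z) /\
      0 < vr Z - (bhi^T *m vM Z *m bhi) 0 0).

Definition sdp_feas D (Z0 Zb : var nx nu mw mlo mhi meps mx mu) : Prop :=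
  let A := vA Zb in let B := vB Zb in let K := vK Zb in
  let B0 := vB Z0 in let K0 := vK Z0 in
  let blo := vblo Zb in let bhi := vbhi Zb in let d := vd Zb in
  let F := dF D in let Plo := dPlo D in let Phi := dPhi D in
  let Inu : 'M[R]_nu := 1%:M in let Inx : 'M[R]_nx := 1%:M in
  hatSigma D A B d (vZ Zb) (vlam Zb) /\ barS D bhi (veps Zb) /\
      posdef (vTh Zb) /\ is_diag_mx (vM Zb) /\
      (forall i, is_diag_mx (vDlo Zb i) /\ is_diag_mx (vW Zb i)) /\
      (forall i, is_diag_mx (vDhi Zb i)) /\
      (forall i, is_diag_mx (vSlo Zb i) /\ is_diag_mx (vShi Zb i)) /\
      (forall i, is_diag_mx (vRlo Zb i) /\ is_diag_mx (vRhi Zb i)) /\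
  (
      (forall i, posdef (sym6
          Inu (0 : 'M[R]_(nu, mlo)) (0 : 'M[R]_(nu, mw)) (- (B^T *m (row i Plo)^T))
            (0 : 'M[R]_(nu, nx)) K
          (vDlo Zb i) (0 : 'M[R]_(mlo, mw)) blo (0 : 'M[R]_(mlo, nx)) (0 : 'M[R]_(mlo, nx))
          (vW Zb i) d (0 : 'M[R]_(mw, nx)) (0 : 'M[R]_(mw, nx))
          (sc (2 * blo i 0) + calL (B^T *m (row i Plo)^T) Inu (B0^T *m (row i Plo)^T) Inu)
            (row i Plo) (row i Plo *m A)
          (calL F (vW Zb i) F (invmx (vW Z0 i))) (0 : 'M[R]_nx)
          (calL Plo (vDlo Zb i) Plo (invmx (vDlo Z0 i)) + calL K Inu K0 Inu))) /\
      (forall i, posdef (sym4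
          Inu (0 : 'M[R]_(nu, mhi)) (- (B^T *m (row i Phi)^T)) K
          (vDhi Zb i) bhi (0 : 'M[R]_(mhi, nx))
          (sc (2 * bhi i 0) + calL (B^T *m (row i Phi)^T) Inu (B0^T *m (row i Phi)^T) Inu)
            (row i Phi *m A)
          (calL Phi (vDhi Zb i) Phi (invmx (vDhi Z0 i)) + calL K Inu K0 Inu))) /\
      (forall i, posdef (sym5
          (vSlo Zb i) (0 : 'M[R]_(mlo, mhi)) blo (0 : 'M[R]_(mlo, nx)) (0 : 'M[R]_(mlo, nx))
          (vShi Zb i) bhi (0 : 'M[R]_(mhi, nx)) (0 : 'M[R]_(mhi, nx))
          (sc (2 * dvx D i 0)) (row i (dVx D)) (row i (dVx D))
          (calL Plo (vSlo Zb i) Plo (invmx (vSlo Z0 i))) (0 : 'M[R]_nx)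
          (calL Phi (vShi Zb i) Phi (invmx (vShi Z0 i))))) /\
      (forall i, posdef (sym5
          (vRlo Zb i) (0 : 'M[R]_(mlo, mhi)) blo (0 : 'M[R]_(mlo, nx)) (0 : 'M[R]_(mlo, nx))
          (vRhi Zb i) bhi (0 : 'M[R]_(mhi, nx)) (0 : 'M[R]_(mhi, nx))
          (sc (2 * dvu D i 0)) (row i (dVu D) *m K) (row i (dVu D) *m K)
          (calL Plo (vRlo Zb i) Plo (invmx (vRlo Z0 i))) (0 : 'M[R]_nx)
          (calL Phi (vRhi Zb i) Phi (invmx (vRhi Z0 i))))) /\
      posdef (sym5
          Inu (0 : 'M[R]_(nu, nx)) (0 : 'M[R]_(nu, nu)) (- B^T) K
          (invmx (dQ D)) (0 : 'M[R]_(nx, nu)) (0 : 'M[R]_nx) Inx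
          (invmx (dR D)) (0 : 'M[R]_(nu, nx)) K
          (calL Inx (vTh Zb) Inx (vTh Z0) + calL B^T Inu B0^T Inu) A
          (vTh Zb + calL K Inu K0 Inu)) /\
      posdef (calL Phi (vM Zb) Phi (invmx (vM Z0)) - vTh Zb) /\
      posdef (sym2 (vM Zb) bhi (sc (vr Zb)))).

Definition sdp_opt D (Z0 Zb : var nx nu mw mlo mhi meps mx mu) : Prop :=
  sdp_feas D Z0 Zb /\ forall Z', sdp_feas D Z0 Z' -> cost D Zb <= cost D Z'.

Definition invert_hats Z : var nx nu mw mlo mhi meps mx mu :=
  Var (vA Z) (vB Z) (vd Z) (vZ Z) (vlam Z) (vK Z) (vblo Z) (vbhi Z) (vTh Z) (vr Z)
    (invmx (vM Z)) (veps Z)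
    (fun i => invmx (vDlo Z i)) (fun i => invmx (vW Z i)) (fun i => invmx (vDhi Z i))
    (fun i => invmx (vSlo Z i)) (fun i => invmx (vShi Z i))
    (fun i => invmx (vRlo Z i)) (fun i => invmx (vRhi Z i)).

End NLPSDP.

(* Main.v *)
Require Import Defs.
From HB Require Import structures.
From mathcomp Require Import all_boot all_order all_algebra.
Import Order.TTheory GRing.Theory Num.Theory.
Local Open Scope ring_scope.
From mathcomp Require Import ring.
Set Implicit Arguments.
Unset Strict Implicit.
Unset Printing Implicit Defensive.

Section Infra.
Variable R : realFieldType.

Definition q n (A : 'M[R]_n) (x : 'cV[R]_n) : R := (x^T *m A *m x) 0 0.
Definition psd n (A : 'M[R]_n) : Prop := A^T = A /\ forall x, 0 <= q A x.

Lemma addE m n (A B : 'M[R]_(m,n)) i j : (A + B) i j = A i j + B i j.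
Proof. by rewrite mxE. Qed.
Lemma oppE m n (A : 'M[R]_(m,n)) i j : (- A) i j = - A i j.
Proof. by rewrite mxE. Qed.

Lemma zeroE m n i j : (0 : 'M[R]_(m,n)) i j = 0.
Proof. by rewrite mxE. Qed.

Ltac mxring := apply/matrixP => ? ?; rewrite ?(addE, oppE, zeroE); ring.

Lemma trB m n (A B : 'M[R]_(m,n)) : (A - B)^T = A^T - B^T.
Proof. by rewrite linearB. Qed.
Lemma trD m n (A B : 'M[R]_(m,n)) : (A + B)^T = A^T + B^T.
Proof. by rewrite linearD. Qed.
Lemma trN m n (A : 'M[R]_(m,n)) : (- A)^T = - A^T.
Proof. by rewrite linearN. Qed.

Lemma posdef_sym n (A : 'M[R]_n) : posdef A -> A^T = A.
Proof. by case. Qed.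

Lemma qD n (A B : 'M[R]_n) x : q (A + B) x = q A x + q B x.
Proof. by rewrite /q mulmxDr mulmxDl addE. Qed.

Lemma posdef_psd n (A : 'M[R]_n) : posdef A -> psd A.
Proof.
move=> [sA pA]; split=> // x; case: (eqVneq x 0) => [->|/pA/ltW//].
by rewrite /q mulmx0 mxE.
Qed.

Lemma psd0 n : psd (0 : 'M[R]_n).
Proof. by split; [rewrite trmx0|move=> x; rewrite /q mulmx0 mul0mx mxE]. Qed.

Lemma psd_add n (A B : 'M[R]_n) : psd A -> psd B -> psd (A + B).
Proof.
move=> [sA pA] [sB pB]; split; first by rewrite trD sA sB.
by move=> x; rewrite qD addr_ge0.
Qed.

Lemma posdef_add_psd n (A B : 'M[R]_n) : posdef A -> psd B -> posdef (A + B).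
Proof.
move=> [sA pA] [sB pB]; split; first by rewrite trD sA sB.
move=> x x0; change (0 < q (A + B) x); rewrite qD ltr_wpDr //; exact: pA.
Qed.

Lemma psd_congr n m (Q : 'M[R]_n) (X : 'M[R]_(n,m)) : psd Q -> psd (X^T *m Q *m X).
Proof.
move=> [sQ pQ]; split; first by rewrite !trmx_mul trmxK sQ mulmxA.
move=> x; have := pQ (X *m x); rewrite /q trmx_mul !mulmxA //.
Qed.

Lemma posdef_inj n (A : 'M[R]_n) (x : 'cV[R]_n) : posdef A -> A *m x = 0 -> x = 0.
Proof.
move=> [sA pA] Ax; apply/eqP; apply: contraT => /pA.
by rewrite -mulmxA Ax mulmx0 mxE ltxx.
Qed.

Lemma posdef_unit n (A : 'M[R]_n) : posdef A -> A \in unitmx.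
Proof.
move=> pA; rewrite -row_free_unit; apply: inj_row_free => v vA.
have : A *m v^T = 0 by rewrite -(posdef_sym pA) -trmx_mul vA trmx0.
by move/(posdef_inj pA) => /(congr1 trmx); rewrite trmxK trmx0.
Qed.

Lemma posdef_inv n (A : 'M[R]_n) : posdef A -> posdef (invmx A).
Proof.
move=> pA; have uA := posdef_unit pA; have sA := posdef_sym pA.
split; first by rewrite trmx_inv sA.
move=> x x0; set y := invmx A *m x.
have y0 : y != 0.
  by apply: contraNneq x0 => y0; rewrite -(mulKVmx uA x) -/y y0 mulmx0.
case: pA => _ /(_ y y0); rewrite /q /y trmx_mul trmx_inv sA.
by rewrite !mulmxA mulmxKV.
Qed.

Lemma sym2_tr p r (A : 'M[R]_p) B (C : 'M[R]_r) :
  A^T = A -> C^T = C -> (sym2 A B C)^T = sym2 A B C.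
Proof. by move=> sA sC; rewrite /sym2 tr_block_mx trmxK sA sC. Qed.

Lemma sym2_trE p r (A : 'M[R]_p) B (C : 'M[R]_r) :
  (sym2 A B C)^T = sym2 A B C -> A^T = A /\ C^T = C.
Proof.
rewrite /sym2 tr_block_mx trmxK => /eq_block_mx [-> _ _ ->]; by [].
Qed.

Lemma sq_sym2 p r (A : 'M[R]_p) B (C : 'M[R]_r) (u : 'cV[R]_p) (v : 'cV[R]_r) :
  A^T = A -> A \in unitmx ->
  (col_mx u v)^T *m sym2 A B C *m col_mx u v =
  (u + invmx A *m B *m v)^T *m A *m (u + invmx A *m B *m v)
  + v^T *m (C - B^T *m invmx A *m B) *m v.
Proof.
move=> sA uA.
rewrite tr_col_mx /sym2 mul_row_block mul_row_col trD !trmx_mul trmx_inv sA.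
rewrite !(mulmxDl, mulmxDr, mulmxBl, mulmxBr, mulmxN, mulNmx) !mulmxA mulmxK // !mulmxKV //.
mxring.
Qed.

Lemma col_mx_neq0 p r (u : 'cV[R]_p) (v : 'cV[R]_r) :
  (col_mx u v != 0) = (u != 0) || (v != 0).
Proof. by rewrite col_mx_eq0 negb_and. Qed.

Lemma schurP p r (A : 'M[R]_p) B (C : 'M[R]_r) :
  posdef (sym2 A B C) <-> posdef A /\ posdef (C - B^T *m invmx A *m B).
Proof.
split.
  move=> [sM pM]; have [sA sC] := sym2_trE sM.
  have pA : posdef A.
    split=> // u u0; have := pM (col_mx u 0); rewrite col_mx_neq0 u0 => /(_ isT).
    rewrite /q tr_col_mx /sym2 mul_row_block mul_row_col trmx0.
    by rewrite !(mul0mx, mulmx0, addr0).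
  have uA := posdef_unit pA; split=> //; split.
    by rewrite trB !trmx_mul trmx_inv trmxK sA sC mulmxA.
  move=> v v0; have := pM (col_mx (- (invmx A *m B *m v)) v).
  rewrite col_mx_neq0 v0 orbT => /(_ isT).
  by rewrite /q sq_sym2 // addNr mulmx0 add0r.
move=> [pA [sS pS]]; have sA := posdef_sym pA; have uA := posdef_unit pA.
have sC : C^T = C.
  have -> : C = (C - B^T *m invmx A *m B) + B^T *m invmx A *m B by rewrite subrK.
  by rewrite trD sS !trmx_mul trmx_inv trmxK sA mulmxA.
split; first exact: sym2_tr.
move=> x; rewrite -(vsubmxK x); move: (usubmx x) (dsubmx x) => u v.
rewrite /q sq_sym2 // addE col_mx_neq0.
case: (eqVneq v 0) => [->|v0] /=.
  rewrite orbF mulmx0 addr0 => u0.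
  by rewrite trmx0 !mul0mx zeroE addr0; case: pA => _ /(_ u u0).
move=> _; have := pS v v0; rewrite /q => h.
apply: ltr_wpDl h; have [_ pA'] := posdef_psd pA; exact: pA'.
Qed.


Lemma calL_psd m n (Lb : 'M[R]_(m,n)) Db L D :
  posdef Db -> (invmx D)^T = invmx D ->
  psd (Lb^T *m invmx Db *m Lb - calL Lb Db L D).
Proof.
move=> pDb sE; have uDb := posdef_unit pDb; have sDb := posdef_sym pDb.
set E := invmx D in sE *.
have -> : Lb^T *m invmx Db *m Lb - calL Lb Db L D =
    (Lb - Db *m E *m L)^T *m invmx Db *m (Lb - Db *m E *m L).
  rewrite /calL -/E trB !trmx_mul sE sDb.
  rewrite !(mulmxDl, mulmxDr, mulmxBl, mulmxBr, mulmxN, mulNmx) !mulmxA.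
  rewrite !mulmxK // !mulmxKV //.
  mxring.
exact/psd_congr/posdef_psd/posdef_inv.
Qed.

Lemma calL_same m n (L : 'M[R]_(m,n)) D :
  D \in unitmx -> calL L D L D = L^T *m invmx D *m L.
Proof.
move=> uD; rewrite /calL mulmxKV //; mxring.
Qed.

Lemma pos_sq (a d : R) : a != 0 -> 0 < d -> 0 < a * d * a.
Proof.
move=> a0 d0; rewrite mulrAC; apply: mulr_gt0 => //.
by rewrite lt0r mulf_neq0 //= -expr2 sqr_ge0.
Qed.

Lemma diagE n (d : 'rV[R]_n) i : diag_mx d i i = d 0 i.
Proof. by rewrite mxE; case: eqP. Qed.

Lemma diagpos_posdef n (A : 'M[R]_n) : diagpos A -> posdef A.
Proof.
move=> [/diag_mxP [d ->] dpos].
have dp : forall i, 0 < d 0 i by move=> i; have := dpos i; rewrite diagE.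
split; first by rewrite tr_diag_mx.
move=> x x0.
have [j xj] : exists j, x j 0 != 0.
  apply/existsP; apply: contraR x0 => /existsPn h; apply/eqP/matrixP => i k.
  by rewrite ord1 zeroE; apply/eqP; move: (h i); rewrite negbK.
rewrite mul_mx_diag mxE (bigD1 j) //= mxE mxE.
apply: ltr_pwDl; first exact: pos_sq.
apply: sumr_ge0 => i _; rewrite !mxE.
case: (eqVneq (x i 0) 0) => [->|xi]; first by rewrite !mul0r.
exact/ltW/pos_sq.
Qed.

Lemma posdef_diag n (A : 'M[R]_n) i : posdef A -> 0 < A i i.
Proof.
move=> [_ pA]; have := pA (delta_mx i 0).
rewrite trmx_delta -rowE -colE !mxE; apply.
apply/eqP => /matrixP /(_ i 0); rewrite !mxE !eqxx /=.
by move/eqP; rewrite oner_eq0.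
Qed.

Lemma diagpos_inv n (A : 'M[R]_n) : diagpos A -> diagpos (invmx A).
Proof.
move=> hA; have pA := diagpos_posdef hA.
case: hA => /diag_mxP [d dE] dpos.
have dp : forall i, 0 < d 0 i by move=> i; have := dpos i; rewrite dE diagE.
set e := \row_j (d 0 j)^-1.
have h : A *m diag_mx e = 1%:M.
  rewrite dE mulmx_diag -diag_const_mx; congr diag_mx; apply/matrixP => i j.
  by rewrite !mxE divff // gt_eqF.
have uA : A \in unitmx by case: (mulmx1_unit h).
have -> : invmx A = diag_mx e.
  by rewrite -[invmx A]mulmx1 -h mulmxA mulVmx // mul1mx.
split; first exact: diag_mx_is_diag.
by move=> i; rewrite diagE mxE invr_gt0.
Qed.

Lemma sym2_add p r (a : 'M[R]_p) (b : 'M[R]_(p,r)) c a' b' c' :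
  sym2 a b c + sym2 a' b' c' = sym2 (a + a') (b + b') (c + c').
Proof. by rewrite /sym2 add_block_mx trD. Qed.

Lemma psd_blockdiag p r (a : 'M[R]_p) (c : 'M[R]_r) :
  psd a -> psd c -> psd (sym2 a 0 c).
Proof.
move=> [sa pa] [sc pc]; split; first exact: sym2_tr.
move=> x; rewrite -(vsubmxK x); move: (usubmx x) (dsubmx x) => u v.
rewrite /q tr_col_mx /sym2 mul_row_block mul_row_col trmx0 !mulmx0 ?mul0mx.
by rewrite addr0 add0r addE addr_ge0 //; [apply: pa | apply: pc].
Qed.

Lemma mono2 p r (a : 'M[R]_p) (b : 'M[R]_(p,r)) c pa pc ta tc :
  posdef (sym2 a b c) -> psd pa -> psd pc -> ta = a + pa -> tc = c + pc ->
  posdef (sym2 ta b tc).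
Proof.
move=> H ha hc -> ->.
have -> : sym2 (a + pa) b (c + pc) = sym2 a b c + sym2 pa 0 pc by rewrite sym2_add addr0.
exact/posdef_add_psd/psd_blockdiag.
Qed.

Lemma mono3 p r s (a : 'M[R]_p) (b : 'M[R]_(p,r)) (c : 'M[R]_(p,s)) d e f
   pa pd pf ta td tf :
  posdef (sym3 a b c d e f) -> psd pa -> psd pd -> psd pf ->
  ta = a + pa -> td = d + pd -> tf = f + pf ->
  posdef (sym3 ta b c td e tf).
Proof.
rewrite /sym3 => H ha hd hf ea ed ef.
apply: (mono2 H ha (psd_blockdiag hd hf) ea).
by rewrite ed ef sym2_add addr0.
Qed.

Local Notation sch X N Y := (trmx X *m N *m Y).

Lemma schG a b m (P : 'M[R]_a) (Rr : 'M[R]_(a, b)) (C : 'M[R]_b)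
  (X : 'M[R]_(m,a)) (Y : 'M[R]_(m,b)) (N : 'M[R]_m) : N^T = N ->
  sym2 P Rr C - sch (row_mx X Y) N (row_mx X Y) =
  sym2 (P - sch X N X) (Rr - sch X N Y) (C - sch Y N Y).
Proof.
move=> sN; rewrite /sym2 tr_row_mx mul_col_mx mul_col_row opp_block_mx add_block_mx.
by rewrite trB !trmx_mul trmxK sN mulmxA.
Qed.

Lemma schRw m a b c (A : 'M[R]_(a,b)) (B : 'M[R]_(a,c)) (X : 'M[R]_(m,a))
  (N : 'M[R]_m) (Cc : 'M[R]_(m,b)) (Dd : 'M[R]_(m,c)) :
  row_mx A B - sch X N (row_mx Cc Dd) = row_mx (A - sch X N Cc) (B - sch X N Dd).
Proof. by rewrite mul_mx_row opp_row_mx add_row_mx. Qed.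

Lemma sym6eq p1 p2 p3 p4 p5 p6 (A11 : 'M[R]_(p1,p1)) (A12 : 'M[R]_(p1,p2)) (A13 : 'M[R]_(p1,p3)) (A14 : 'M[R]_(p1,p4)) (A15 : 'M[R]_(p1,p5)) (A16 : 'M[R]_(p1,p6)) (A22 : 'M[R]_(p2,p2)) (A23 : 'M[R]_(p2,p3)) (A24 : 'M[R]_(p2,p4)) (A25 : 'M[R]_(p2,p5)) (A26 : 'M[R]_(p2,p6)) (A33 : 'M[R]_(p3,p3)) (A34 : 'M[R]_(p3,p4)) (A35 : 'M[R]_(p3,p5)) (A36 : 'M[R]_(p3,p6)) (A44 : 'M[R]_(p4,p4)) (A45 : 'M[R]_(p4,p5)) (A46 : 'M[R]_(p4,p6)) (A55 : 'M[R]_(p5,p5)) (A56 : 'M[R]_(p5,p6)) (A66 : 'M[R]_(p6,p6)) (N : 'M[R]_p1) :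
  N^T = N ->
  sym5 A22 A23 A24 A25 A26 A33 A34 A35 A36 A44 A45 A46 A55 A56 A66 - sch (row_mx A12 (row_mx A13 (row_mx A14 (row_mx A15 A16)))) N (row_mx A12 (row_mx A13 (row_mx A14 (row_mx A15 A16)))) =
  sym5 (A22 - sch A12 N A12) (A23 - sch A12 N A13) (A24 - sch A12 N A14) (A25 - sch A12 N A15) (A26 - sch A12 N A16) (A33 - sch A13 N A13) (A34 - sch A13 N A14) (A35 - sch A13 N A15) (A36 - sch A13 N A16) (A44 - sch A14 N A14) (A45 - sch A14 N A15) (A46 - sch A14 N A16) (A55 - sch A15 N A15) (A56 - sch A15 N A16) (A66 - sch A16 N A16).
Proof. move=> sN; rewrite /sym5 /sym4 /sym3 !schG // ?schRw //. Qed.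

Lemma sym6P p1 p2 p3 p4 p5 p6 (A11 : 'M[R]_(p1,p1)) (A12 : 'M[R]_(p1,p2)) (A13 : 'M[R]_(p1,p3)) (A14 : 'M[R]_(p1,p4)) (A15 : 'M[R]_(p1,p5)) (A16 : 'M[R]_(p1,p6)) (A22 : 'M[R]_(p2,p2)) (A23 : 'M[R]_(p2,p3)) (A24 : 'M[R]_(p2,p4)) (A25 : 'M[R]_(p2,p5)) (A26 : 'M[R]_(p2,p6)) (A33 : 'M[R]_(p3,p3)) (A34 : 'M[R]_(p3,p4)) (A35 : 'M[R]_(p3,p5)) (A36 : 'M[R]_(p3,p6)) (A44 : 'M[R]_(p4,p4)) (A45 : 'M[R]_(p4,p5)) (A46 : 'M[R]_(p4,p6)) (A55 : 'M[R]_(p5,p5)) (A56 : 'M[R]_(p5,p6)) (A66 : 'M[R]_(p6,p6)) :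
  posdef (sym6 A11 A12 A13 A14 A15 A16 A22 A23 A24 A25 A26 A33 A34 A35 A36 A44 A45 A46 A55 A56 A66) <->
  posdef A11 /\ posdef (sym5 (A22 - sch A12 (invmx A11) A12) (A23 - sch A12 (invmx A11) A13) (A24 - sch A12 (invmx A11) A14) (A25 - sch A12 (invmx A11) A15) (A26 - sch A12 (invmx A11) A16) (A33 - sch A13 (invmx A11) A13) (A34 - sch A13 (invmx A11) A14) (A35 - sch A13 (invmx A11) A15) (A36 - sch A13 (invmx A11) A16) (A44 - sch A14 (invmx A11) A14) (A45 - sch A14 (invmx A11) A15) (A46 - sch A14 (invmx A11) A16) (A55 - sch A15 (invmx A11) A15) (A56 - sch A15 (invmx A11) A16) (A66 - sch A16 (invmx A11) A16)).
Proof.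
rewrite /sym6 schurP; split=> [[pA H]|[pA H]]; split=> //;
  have sN : (invmx A11)^T = invmx A11 by rewrite trmx_inv (posdef_sym pA).
  by rewrite -sym6eq.
by rewrite sym6eq.
Qed.

Lemma sym5eq p1 p2 p3 p4 p5 (A11 : 'M[R]_(p1,p1)) (A12 : 'M[R]_(p1,p2)) (A13 : 'M[R]_(p1,p3)) (A14 : 'M[R]_(p1,p4)) (A15 : 'M[R]_(p1,p5)) (A22 : 'M[R]_(p2,p2)) (A23 : 'M[R]_(p2,p3)) (A24 : 'M[R]_(p2,p4)) (A25 : 'M[R]_(p2,p5)) (A33 : 'M[R]_(p3,p3)) (A34 : 'M[R]_(p3,p4)) (A35 : 'M[R]_(p3,p5)) (A44 : 'M[R]_(p4,p4)) (A45 : 'M[R]_(p4,p5)) (A55 : 'M[R]_(p5,p5)) (N : 'M[R]_p1) :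
  N^T = N ->
  sym4 A22 A23 A24 A25 A33 A34 A35 A44 A45 A55 - sch (row_mx A12 (row_mx A13 (row_mx A14 A15))) N (row_mx A12 (row_mx A13 (row_mx A14 A15))) =
  sym4 (A22 - sch A12 N A12) (A23 - sch A12 N A13) (A24 - sch A12 N A14) (A25 - sch A12 N A15) (A33 - sch A13 N A13) (A34 - sch A13 N A14) (A35 - sch A13 N A15) (A44 - sch A14 N A14) (A45 - sch A14 N A15) (A55 - sch A15 N A15).
Proof. move=> sN; rewrite /sym4 /sym3 !schG // ?schRw //. Qed.

Lemma sym5P p1 p2 p3 p4 p5 (A11 : 'M[R]_(p1,p1)) (A12 : 'M[R]_(p1,p2)) (A13 : 'M[R]_(p1,p3)) (A14 : 'M[R]_(p1,p4)) (A15 : 'M[R]_(p1,p5)) (A22 : 'M[R]_(p2,p2)) (A23 : 'M[R]_(p2,p3)) (A24 : 'M[R]_(p2,p4)) (A25 : 'M[R]_(p2,p5)) (A33 : 'M[R]_(p3,p3)) (A34 : 'M[R]_(p3,p4)) (A35 : 'M[R]_(p3,p5)) (A44 : 'M[R]_(p4,p4)) (A45 : 'M[R]_(p4,p5)) (A55 : 'M[R]_(p5,p5)) :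
  posdef (sym5 A11 A12 A13 A14 A15 A22 A23 A24 A25 A33 A34 A35 A44 A45 A55) <->
  posdef A11 /\ posdef (sym4 (A22 - sch A12 (invmx A11) A12) (A23 - sch A12 (invmx A11) A13) (A24 - sch A12 (invmx A11) A14) (A25 - sch A12 (invmx A11) A15) (A33 - sch A13 (invmx A11) A13) (A34 - sch A13 (invmx A11) A14) (A35 - sch A13 (invmx A11) A15) (A44 - sch A14 (invmx A11) A14) (A45 - sch A14 (invmx A11) A15) (A55 - sch A15 (invmx A11) A15)).
Proof.
rewrite /sym5 schurP; split=> [[pA H]|[pA H]]; split=> //;
  have sN : (invmx A11)^T = invmx A11 by rewrite trmx_inv (posdef_sym pA).
  by rewrite -sym5eq.
by rewrite sym5eq.
Qed.

Lemma sym4eq p1 p2 p3 p4 (A11 : 'M[R]_(p1,p1)) (A12 : 'M[R]_(p1,p2)) (A13 : 'M[R]_(p1,p3)) (A14 : 'M[R]_(p1,p4)) (A22 : 'M[R]_(p2,p2)) (A23 : 'M[R]_(p2,p3)) (A24 : 'M[R]_(p2,p4)) (A33 : 'M[R]_(p3,p3)) (A34 : 'M[R]_(p3,p4)) (A44 : 'M[R]_(p4,p4)) (N : 'M[R]_p1) :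
  N^T = N ->
  sym3 A22 A23 A24 A33 A34 A44 - sch (row_mx A12 (row_mx A13 A14)) N (row_mx A12 (row_mx A13 A14)) =
  sym3 (A22 - sch A12 N A12) (A23 - sch A12 N A13) (A24 - sch A12 N A14) (A33 - sch A13 N A13) (A34 - sch A13 N A14) (A44 - sch A14 N A14).
Proof. move=> sN; rewrite /sym3 !schG // ?schRw //. Qed.

Lemma sym4P p1 p2 p3 p4 (A11 : 'M[R]_(p1,p1)) (A12 : 'M[R]_(p1,p2)) (A13 : 'M[R]_(p1,p3)) (A14 : 'M[R]_(p1,p4)) (A22 : 'M[R]_(p2,p2)) (A23 : 'M[R]_(p2,p3)) (A24 : 'M[R]_(p2,p4)) (A33 : 'M[R]_(p3,p3)) (A34 : 'M[R]_(p3,p4)) (A44 : 'M[R]_(p4,p4)) :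
  posdef (sym4 A11 A12 A13 A14 A22 A23 A24 A33 A34 A44) <->
  posdef A11 /\ posdef (sym3 (A22 - sch A12 (invmx A11) A12) (A23 - sch A12 (invmx A11) A13) (A24 - sch A12 (invmx A11) A14) (A33 - sch A13 (invmx A11) A13) (A34 - sch A13 (invmx A11) A14) (A44 - sch A14 (invmx A11) A14)).
Proof.
rewrite /sym4 schurP; split=> [[pA H]|[pA H]]; split=> //;
  have sN : (invmx A11)^T = invmx A11 by rewrite trmx_inv (posdef_sym pA).
  by rewrite -sym4eq.
by rewrite sym4eq.
Qed.

Lemma sym3eq p1 p2 p3 (A11 : 'M[R]_(p1,p1)) (A12 : 'M[R]_(p1,p2)) (A13 : 'M[R]_(p1,p3)) (A22 : 'M[R]_(p2,p2)) (A23 : 'M[R]_(p2,p3)) (A33 : 'M[R]_(p3,p3)) (N : 'M[R]_p1) :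
  N^T = N ->
  sym2 A22 A23 A33 - sch (row_mx A12 A13) N (row_mx A12 A13) =
  sym2 (A22 - sch A12 N A12) (A23 - sch A12 N A13) (A33 - sch A13 N A13).
Proof. move=> sN; rewrite  !schG // ?schRw //. Qed.

Lemma sym3P p1 p2 p3 (A11 : 'M[R]_(p1,p1)) (A12 : 'M[R]_(p1,p2)) (A13 : 'M[R]_(p1,p3)) (A22 : 'M[R]_(p2,p2)) (A23 : 'M[R]_(p2,p3)) (A33 : 'M[R]_(p3,p3)) :
  posdef (sym3 A11 A12 A13 A22 A23 A33) <->
  posdef A11 /\ posdef (sym2 (A22 - sch A12 (invmx A11) A12) (A23 - sch A12 (invmx A11) A13) (A33 - sch A13 (invmx A11) A13)).
Proof.
rewrite /sym3 schurP; split=> [[pA H]|[pA H]]; split=> //;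
  have sN : (invmx A11)^T = invmx A11 by rewrite trmx_inv (posdef_sym pA).
  by rewrite -sym3eq.
by rewrite sym3eq.
Qed.

Lemma scE n (r : R) (i : 'I_n) : (r%:M : 'M[R]_n) i i = r.
Proof. by rewrite mxE; case: eqP. Qed.

Lemma posdef1 n : posdef (1%:M : 'M[R]_n).
Proof.
apply: diagpos_posdef; split; first exact: scalar_mx_is_diag.
by move=> i; rewrite scE ltr01.
Qed.

Lemma pos11 (M : 'M[R]_1) : 0 < M 0 0 -> posdef M.
Proof.
move=> h; split.
  by apply/matrixP => i j; rewrite !ord1 mxE.
move=> x x0; rewrite mxE big_ord1 mxE big_ord1 mxE.
apply: pos_sq => //; apply: contraNneq x0 => e.
by apply/eqP/matrixP => i j; rewrite !ord1 e zeroE.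
Qed.

Lemma pos11E (M : 'M[R]_1) : posdef M -> 0 < M 0 0.
Proof.
move=> [_ /(_ 1%:M)]; rewrite trmx1 mul1mx mulmx1; apply.
by rewrite oner_neq0.
Qed.

Lemma mono2' p r (a : 'M[R]_p) (b : 'M[R]_(p,r)) c pa pc ta tb tc :
  posdef (sym2 a b c) -> psd pa -> psd pc -> ta = a + pa -> tb = b -> tc = c + pc ->
  posdef (sym2 ta tb tc).
Proof. by move=> H ha hc ea -> ec; apply: (mono2 H ha hc). Qed.

Lemma mono3' p r s (a : 'M[R]_p) (b : 'M[R]_(p,r)) (c : 'M[R]_(p,s)) d e f
   pa pd pf ta tb tc td te tf :
  posdef (sym3 a b c d e f) -> psd pa -> psd pd -> psd pf ->
  ta = a + pa -> tb = b -> tc = c -> td = d + pd -> te = e -> tf = f + pf ->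
  posdef (sym3 ta tb tc td te tf).
Proof. by move=> H ha hd hf ea -> -> ed -> ef; apply: (mono3 H ha hd hf). Qed.

Lemma calL_psd1 m n (Lb : 'M[R]_(m,n)) L :
  psd (Lb^T *m Lb - calL Lb 1%:M L 1%:M).
Proof.
have := @calL_psd _ _ Lb 1%:M L 1%:M (posdef1 _).
by rewrite invmx1 mulmx1 trmx1; apply.
Qed.

Lemma calL_psdI m n (Lb : 'M[R]_(m,n)) Db L D0 :
  posdef Db -> posdef D0 ->
  psd (Lb^T *m invmx Db *m Lb - calL Lb Db L (invmx D0)).
Proof.
move=> pDb pD0; apply: calL_psd => //; by rewrite invmxK (posdef_sym pD0).
Qed.

Ltac simp H := rewrite ?(trmx0, mul0mx, mulmx0, subr0, addr0, oppr0, invmx1, mulmx1, mul1mx, trmx1,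
   trN, mulNmx, mulmxN, opprK, invmxK, trmxK) in H.
Ltac simpg := rewrite ?(trmx0, mul0mx, mulmx0, subr0, addr0, oppr0, invmx1, mulmx1, mul1mx, trmx1,
   trN, mulNmx, mulmxN, opprK, invmxK, trmxK).

Lemma rpi1 nu mlo mw nx (B B0 : 'M[R]_(nx,nu)) (K K0 : 'M[R]_(nu,nx))
  (Pi : 'M[R]_(1,nx)) (Plo : 'M[R]_(mlo,nx)) (A : 'M[R]_nx) (Dh D0 : 'M[R]_mlo)
  (Wh W0 : 'M[R]_mw) (F : 'M[R]_(mw,nx)) (blo : 'cV[R]_mlo) (bi : R) (d : 'cV[R]_mw) :
  posdef W0 -> posdef D0 ->
  posdef (sym6 (1%:M : 'M[R]_nu) (0 : 'M[R]_(nu, mlo)) (0 : 'M[R]_(nu, mw)) (- (B^T *m Pi^T))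
            (0 : 'M[R]_(nu, nx)) K
          Dh (0 : 'M[R]_(mlo, mw)) blo (0 : 'M[R]_(mlo, nx)) (0 : 'M[R]_(mlo, nx))
          Wh d (0 : 'M[R]_(mw, nx)) (0 : 'M[R]_(mw, nx))
          (sc (2 * bi) + calL (B^T *m Pi^T) 1%:M (B0^T *m Pi^T) 1%:M)
            Pi (Pi *m A)
          (calL F Wh F (invmx W0)) (0 : 'M[R]_nx)
          (calL Plo Dh Plo (invmx D0) + calL K 1%:M K0 1%:M)) ->
  posdef Dh /\ posdef Wh /\
  posdef (sym3 (sc (2 * bi) - blo^T *m invmx Dh *m blo - d^T *m invmx Wh *m d)
     Pi (Pi *m (A + B *m K)) (F^T *m invmx Wh *m F) 0 (Plo^T *m invmx Dh *m Plo)).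
Proof.
move=> pW0 pD0 /sym6P [_ H]; simp H.
move/sym5P: H => [pDh H]; simp H.
move/sym4P: H => [pWh H]; simp H.
do 2!split => //.
apply: (mono3' H (calL_psd1 _ (B0^T *m Pi^T)) (calL_psdI F F pWh pW0)
   (psd_add (calL_psdI Plo Plo pDh pD0) (calL_psd1 K K0))).
- mxring.
- by [].
- by rewrite !trmx_mul !trmxK mulmxDr mulmxA.
- mxring.
- by [].
- mxring.
Qed.

Lemma pi1 nu mhi nx (B B0 : 'M[R]_(nx,nu)) (K K0 : 'M[R]_(nu,nx))
  (Pi : 'M[R]_(1,nx)) (Phi : 'M[R]_(mhi,nx)) (A : 'M[R]_nx) (Dh D0 : 'M[R]_mhi)
  (bhi : 'cV[R]_mhi) (bi : R) :
  posdef D0 ->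
  posdef (sym4 (1%:M : 'M[R]_nu) (0 : 'M[R]_(nu, mhi)) (- (B^T *m Pi^T)) K
          Dh bhi (0 : 'M[R]_(mhi, nx))
          (sc (2 * bi) + calL (B^T *m Pi^T) 1%:M (B0^T *m Pi^T) 1%:M) (Pi *m A)
          (calL Phi Dh Phi (invmx D0) + calL K 1%:M K0 1%:M)) ->
  posdef Dh /\
  posdef (sym2 (sc (2 * bi) - bhi^T *m invmx Dh *m bhi) (Pi *m (A + B *m K))
     (Phi^T *m invmx Dh *m Phi)).
Proof.
move=> pD0 /sym4P [_ H]; simp H.
move/sym3P: H => [pDh H]; simp H.
split => //.
apply: (mono2' H (calL_psd1 _ (B0^T *m Pi^T))
   (psd_add (calL_psdI Phi Phi pDh pD0) (calL_psd1 K K0))).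
- mxring.
- by rewrite !trmx_mul !trmxK mulmxDr mulmxA.
- mxring.
Qed.

Lemma x1 mlo mhi nx (Slo S0lo : 'M[R]_mlo) (Shi S0hi : 'M[R]_mhi)
  (blo : 'cV[R]_mlo) (bhi : 'cV[R]_mhi) (vi : R) (V : 'M[R]_(1,nx))
  (Plo : 'M[R]_(mlo,nx)) (Phi : 'M[R]_(mhi,nx)) :
  posdef S0lo -> posdef S0hi ->
  posdef (sym5 Slo (0 : 'M[R]_(mlo, mhi)) blo (0 : 'M[R]_(mlo, nx)) (0 : 'M[R]_(mlo, nx))
          Shi bhi (0 : 'M[R]_(mhi, nx)) (0 : 'M[R]_(mhi, nx))
          (sc (2 * vi)) V V
          (calL Plo Slo Plo (invmx S0lo)) (0 : 'M[R]_nx)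
          (calL Phi Shi Phi (invmx S0hi))) ->
  posdef Slo /\ posdef Shi /\
  posdef (sym3 (sc (2 * vi) - blo^T *m invmx Slo *m blo - bhi^T *m invmx Shi *m bhi)
     V V (Plo^T *m invmx Slo *m Plo) 0 (Phi^T *m invmx Shi *m Phi)).
Proof.
move=> pS0 pS1 /sym5P [pSlo H]; simp H.
move/sym4P: H => [pShi H]; simp H.
do 2!split => //.
apply: (mono3' H (psd0 _) (calL_psdI Plo Plo pSlo pS0) (calL_psdI Phi Phi pShi pS1)).
- by rewrite addr0.
- by [].
- by [].
- mxring.
- by [].
- mxring.
Qed.

Lemma d1 nu nx (A : 'M[R]_nx) (B B0 : 'M[R]_(nx,nu)) (K K0 : 'M[R]_(nu,nx))
  (Q : 'M[R]_nx) (Rr : 'M[R]_nu) (Th Th0 : 'M[R]_nx) :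
  posdef Q -> posdef Rr -> posdef Th -> posdef Th0 ->
  posdef (sym5 (1%:M : 'M[R]_nu) (0 : 'M[R]_(nu, nx)) (0 : 'M[R]_(nu, nu)) (- B^T) K
          (invmx Q) (0 : 'M[R]_(nx, nu)) (0 : 'M[R]_nx) (1%:M : 'M[R]_nx)
          (invmx Rr) (0 : 'M[R]_(nu, nx)) K
          (calL (1%:M : 'M[R]_nx) Th 1%:M Th0 + calL B^T 1%:M B0^T 1%:M) A
          (Th + calL K 1%:M K0 1%:M)) ->
  negdef ((A + B *m K)^T *m Th *m (A + B *m K) - Th + Q + K^T *m Rr *m K).
Proof.
move=> pQ pRr pTh pTh0 /sym5P [_ H]; simp H.
move/sym4P: H => [_ H]; simp H.
move/sym3P: H => [_ H]; simp H.
have h1 := @calL_psd _ _ 1%:M Th 1%:M Th0 pTh.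
rewrite trmx_inv (posdef_sym pTh0) trmx1 mul1mx mulmx1 in h1.
have {}h1 := h1 erefl.
have h2 := calL_psd1 B^T B0^T; rewrite trmxK in h2.
have T : posdef (sym2 (invmx Th) (A + B *m K) (Th - Q - K^T *m Rr *m K)).
  apply: (mono2' H (psd_add h1 h2) (calL_psd1 K K0)).
  - mxring.
  - by [].
  - mxring.
move/schurP: T => [_ T]; rewrite invmxK in T.
rewrite /negdef.
have -> : - ((A + B *m K)^T *m Th *m (A + B *m K) - Th + Q + K^T *m Rr *m K) =
  Th - Q - K^T *m Rr *m K - (A + B *m K)^T *m Th *m (A + B *m K) by mxring.
exact: T.
Qed.

Lemma e1 mhi nx (Phi : 'M[R]_(mhi,nx)) (Mh M0 : 'M[R]_mhi) (Th : 'M[R]_nx)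
  (bhi : 'cV[R]_mhi) (r : R) :
  posdef M0 -> posdef (calL Phi Mh Phi (invmx M0) - Th) ->
  posdef (sym2 Mh bhi (sc r)) ->
  posdef (Phi^T *m invmx Mh *m Phi - Th) /\ 0 < r - (bhi^T *m invmx Mh *m bhi) 0 0.
Proof.
move=> pM0 H1 /schurP [pMh H2]; split.
  have -> : Phi^T *m invmx Mh *m Phi - Th =
    (calL Phi Mh Phi (invmx M0) - Th) + (Phi^T *m invmx Mh *m Phi - calL Phi Mh Phi (invmx M0))
    by mxring.
  exact: posdef_add_psd H1 (calL_psdI Phi Phi pMh pM0).
by have := pos11E H2; rewrite addE oppE /sc scE.
Qed.

Lemma invunit n (A : 'M[R]_n) : posdef A -> invmx A \in unitmx.
Proof. by move=> pA; rewrite unitmx_inv posdef_unit. Qed.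

Lemma rpi2 nu mlo mw nx (B : 'M[R]_(nx,nu)) (K : 'M[R]_(nu,nx))
  (Pi : 'M[R]_(1,nx)) (Plo : 'M[R]_(mlo,nx)) (A : 'M[R]_nx) (D0 : 'M[R]_mlo)
  (W0 : 'M[R]_mw) (F : 'M[R]_(mw,nx)) (blo : 'cV[R]_mlo) (bi : R) (d : 'cV[R]_mw) :
  posdef D0 -> posdef W0 ->
  posdef (sym3 (sc (2 * bi) - blo^T *m D0 *m blo - d^T *m W0 *m d)
     Pi (Pi *m (A + B *m K)) (F^T *m W0 *m F) 0 (Plo^T *m D0 *m Plo)) ->
  posdef (sym6 (1%:M : 'M[R]_nu) (0 : 'M[R]_(nu, mlo)) (0 : 'M[R]_(nu, mw)) (- (B^T *m Pi^T))
            (0 : 'M[R]_(nu, nx)) K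
          (invmx D0) (0 : 'M[R]_(mlo, mw)) blo (0 : 'M[R]_(mlo, nx)) (0 : 'M[R]_(mlo, nx))
          (invmx W0) d (0 : 'M[R]_(mw, nx)) (0 : 'M[R]_(mw, nx))
          (sc (2 * bi) + calL (B^T *m Pi^T) 1%:M (B^T *m Pi^T) 1%:M)
            Pi (Pi *m A)
          (calL F (invmx W0) F (invmx W0)) (0 : 'M[R]_nx)
          (calL Plo (invmx D0) Plo (invmx D0) + calL K 1%:M K 1%:M)).
Proof.
move=> pD0 pW0 H.
rewrite !(calL_same _ (unitmx1 _ _)) (calL_same _ (invunit pW0)) (calL_same _ (invunit pD0)).
apply/sym6P; split; first exact: posdef1.
simpg; apply/sym5P; split; first exact: posdef_inv.
simpg; apply/sym4P; split; first exact: posdef_inv.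
simpg.
apply: (mono3' H (psd0 _) (psd0 _) (psd0 _)).
- mxring.
- by [].
- by rewrite !trmx_mul !trmxK mulmxDr mulmxA.
- mxring.
- by [].
- mxring.
Qed.

Lemma pi2 nu mhi nx (B : 'M[R]_(nx,nu)) (K : 'M[R]_(nu,nx))
  (Pi : 'M[R]_(1,nx)) (Phi : 'M[R]_(mhi,nx)) (A : 'M[R]_nx) (D0 : 'M[R]_mhi)
  (bhi : 'cV[R]_mhi) (bi : R) :
  posdef D0 ->
  posdef (sym2 (sc (2 * bi) - bhi^T *m D0 *m bhi) (Pi *m (A + B *m K))
     (Phi^T *m D0 *m Phi)) ->
  posdef (sym4 (1%:M : 'M[R]_nu) (0 : 'M[R]_(nu, mhi)) (- (B^T *m Pi^T)) K
          (invmx D0) bhi (0 : 'M[R]_(mhi, nx))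
          (sc (2 * bi) + calL (B^T *m Pi^T) 1%:M (B^T *m Pi^T) 1%:M) (Pi *m A)
          (calL Phi (invmx D0) Phi (invmx D0) + calL K 1%:M K 1%:M)).
Proof.
move=> pD0 H.
rewrite !(calL_same _ (unitmx1 _ _)) (calL_same _ (invunit pD0)).
apply/sym4P; split; first exact: posdef1.
simpg; apply/sym3P; split; first exact: posdef_inv.
simpg.
apply: (mono2' H (psd0 _) (psd0 _)).
- mxring.
- by rewrite !trmx_mul !trmxK mulmxDr mulmxA.
- mxring.
Qed.

Lemma x2 mlo mhi nx (S0lo : 'M[R]_mlo) (S0hi : 'M[R]_mhi)
  (blo : 'cV[R]_mlo) (bhi : 'cV[R]_mhi) (vi : R) (V : 'M[R]_(1,nx))
  (Plo : 'M[R]_(mlo,nx)) (Phi : 'M[R]_(mhi,nx)) :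
  posdef S0lo -> posdef S0hi ->
  posdef (sym3 (sc (2 * vi) - blo^T *m S0lo *m blo - bhi^T *m S0hi *m bhi)
     V V (Plo^T *m S0lo *m Plo) 0 (Phi^T *m S0hi *m Phi)) ->
  posdef (sym5 (invmx S0lo) (0 : 'M[R]_(mlo, mhi)) blo (0 : 'M[R]_(mlo, nx)) (0 : 'M[R]_(mlo, nx))
          (invmx S0hi) bhi (0 : 'M[R]_(mhi, nx)) (0 : 'M[R]_(mhi, nx))
          (sc (2 * vi)) V V
          (calL Plo (invmx S0lo) Plo (invmx S0lo)) (0 : 'M[R]_nx)
          (calL Phi (invmx S0hi) Phi (invmx S0hi))).
Proof.
move=> pS0 pS1 H.
rewrite (calL_same _ (invunit pS0)) (calL_same _ (invunit pS1)).
apply/sym5P; split; first exact: posdef_inv.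
simpg; apply/sym4P; split; first exact: posdef_inv.
simpg.
apply: (mono3' H (psd0 _) (psd0 _) (psd0 _)).
- by rewrite addr0.
- by [].
- by [].
- by rewrite addr0.
- by [].
- by rewrite addr0.
Qed.

Lemma d2 nu nx (A : 'M[R]_nx) (B : 'M[R]_(nx,nu)) (K : 'M[R]_(nu,nx))
  (Q : 'M[R]_nx) (Rr : 'M[R]_nu) (Th : 'M[R]_nx) :
  posdef Q -> posdef Rr -> posdef Th ->
  negdef ((A + B *m K)^T *m Th *m (A + B *m K) - Th + Q + K^T *m Rr *m K) ->
  posdef (sym5 (1%:M : 'M[R]_nu) (0 : 'M[R]_(nu, nx)) (0 : 'M[R]_(nu, nu)) (- B^T) K
          (invmx Q) (0 : 'M[R]_(nx, nu)) (0 : 'M[R]_nx) (1%:M : 'M[R]_nx)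
          (invmx Rr) (0 : 'M[R]_(nu, nx)) K
          (calL (1%:M : 'M[R]_nx) Th 1%:M Th + calL B^T 1%:M B^T 1%:M) A
          (Th + calL K 1%:M K 1%:M)).
Proof.
move=> pQ pRr pTh Hn.
have T : posdef (sym2 (invmx Th) (A + B *m K) (Th - Q - K^T *m Rr *m K)).
  apply/schurP; split; first exact: posdef_inv.
  rewrite invmxK; move: Hn; rewrite /negdef.
  have -> : - ((A + B *m K)^T *m Th *m (A + B *m K) - Th + Q + K^T *m Rr *m K) =
    Th - Q - K^T *m Rr *m K - (A + B *m K)^T *m Th *m (A + B *m K) by mxring.
  by [].
rewrite !(calL_same _ (unitmx1 _ _)) (calL_same _ (posdef_unit pTh)).
apply/sym5P; split; first exact: posdef1.
simpg; apply/sym4P; split; first exact: posdef_inv.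
simpg; apply/sym3P; split; first exact: posdef_inv.
simpg.
apply: (mono2' T (psd0 _) (psd0 _)).
- mxring.
- by [].
- mxring.
Qed.

Lemma e2 mhi nx (Phi : 'M[R]_(mhi,nx)) (M0 : 'M[R]_mhi) (Th : 'M[R]_nx)
  (bhi : 'cV[R]_mhi) (r : R) :
  posdef M0 -> posdef (Phi^T *m M0 *m Phi - Th) ->
  0 < r - (bhi^T *m M0 *m bhi) 0 0 ->
  posdef (calL Phi (invmx M0) Phi (invmx M0) - Th) /\
  posdef (sym2 (invmx M0) bhi (sc r)).
Proof.
move=> pM0 H1 H2; rewrite (calL_same _ (invunit pM0)) invmxK; split => //.
apply/schurP; split; first exact: posdef_inv.
by apply: pos11; rewrite invmxK addE oppE /sc scE.
Qed.

End Infra.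



Unset Implicit Arguments.

Theorem corollary1 (R : realFieldType) (nx nu mw mlo mhi meps mx mu mxv : nat)
  (D : data R nx nu mw mlo mhi meps mx mu mxv)
  (Z0 Zb : var R nx nu mw mlo mhi meps mx mu) :
  posdef (dQ D) -> posdef (dR D) ->
  0 <= dalpha D -> 0 <= dbeta D -> 0 <= dgamma D -> 0 < dtheta D ->
  mxle 0 (dvx D) -> mxle 0 (dvu D) ->
  nlp_feas D Z0 ->
  sdp_opt D Z0 Zb ->
  nlp_feas D (invert_hats Zb) /\ cost D Zb <= cost D Z0.
Proof.
move=> pQ pR _ _ _ _ _ _ HN [HS Hopt].
move: (HN); rewrite /nlp_feas /=.
move=> [hS0 [bS0 [pTh0 [dM0 [dDW0 [dDh0 [dS0 [dR0 [rpi0 [pi0 [xx0 [uu0 [dd0 [ee0 tt0]]]]]]]]]]]]]].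
have pM0 := diagpos_posdef dM0.
have pD0 i := diagpos_posdef (dDW0 i).1.
have pW0 i := diagpos_posdef (dDW0 i).2.
have pDh0 i := diagpos_posdef (dDh0 i).
have pSl0 i := diagpos_posdef (dS0 i).1.
have pSh0 i := diagpos_posdef (dS0 i).2.
have pRl0 i := diagpos_posdef (dR0 i).1.
have pRh0 i := diagpos_posdef (dR0 i).2.
split.
  move: (HS); rewrite /sdp_feas /=.
  move=> [hS [bS [pTh [dM [dDW [dDh [dS [dR [rpi [pi [xx [uu [dd [ee tt]]]]]]]]]]]]]].
  rewrite /nlp_feas /=.
  have R1 i := rpi1 (pW0 i) (pD0 i) (rpi i).
  have P1 i := pi1 (pDh0 i) (pi i).
  have X1 i := x1 (pSl0 i) (pSh0 i) (xx i).
  have U1 i := x1 (pRl0 i) (pRh0 i) (uu i).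
  have pMh : posdef (vM Zb) by case/schurP: tt.
  have E1 := e1 pM0 ee tt.
  have dpos n (X : 'M[R]_n) : is_diag_mx X -> posdef X -> diagpos (invmx X).
    by move=> h p; apply: diagpos_inv; split => // i; apply: posdef_diag.
  split => //; split => //; split => //.
  split; first exact: dpos.
  split; first by move=> i; case: (R1 i) => a [b _]; split; apply: dpos => //;
    [exact: (dDW i).1 | exact: (dDW i).2].
  split; first by move=> i; case: (P1 i) => a _; apply: dpos.
  split; first by move=> i; case: (X1 i) => a [b _]; split; apply: dpos => //;
    [exact: (dS i).1 | exact: (dS i).2].
  split; first by move=> i; case: (U1 i) => a [b _]; split; apply: dpos => //;
    [exact: (dR i).1 | exact: (dR i).2].
  split; first by move=> i; case: (R1 i) => _ [_ c].
  split; first by move=> i; case: (P1 i) => _ c.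
  split; first by move=> i; case: (X1 i) => _ [_ c].
  split; first by move=> i; case: (U1 i) => _ [_ c].
  split; first exact: (d1 pQ pR pTh pTh0 dd).
  exact: E1.
have S2 : sdp_feas D Z0 (invert_hats Z0).
  rewrite /sdp_feas /=.
  split => //; split => //; split => //.
  split; first exact: (diagpos_inv dM0).1.
  split; first by move=> i; split; [exact: (diagpos_inv (dDW0 i).1).1 | exact: (diagpos_inv (dDW0 i).2).1].
  split; first by move=> i; exact: (diagpos_inv (dDh0 i)).1.
  split; first by move=> i; split; [exact: (diagpos_inv (dS0 i).1).1 | exact: (diagpos_inv (dS0 i).2).1].
  split; first by move=> i; split; [exact: (diagpos_inv (dR0 i).1).1 | exact: (diagpos_inv (dR0 i).2).1].
  split; first by move=> i; exact: rpi2 (pD0 i) (pW0 i) (rpi0 i).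
  split; first by move=> i; exact: pi2 (pDh0 i) (pi0 i).
  split; first by move=> i; exact: x2 (pSl0 i) (pSh0 i) (xx0 i).
  split; first by move=> i; exact: x2 (pRl0 i) (pRh0 i) (uu0 i).
  split; first exact: d2 pQ pR pTh0 dd0.
  exact: e2 pM0 ee0 tt0.
exact: Hopt _ S2.
Qed.
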